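(* Let $N$ be a positive integer divisible by $4$, let $h>0$ and $\sigma\ge 0$, and set $N_1=N$, $N_2=N/2$, $N_3=N/4$. Let $u_1,\dots,u_N$ be deterministic real numbers and let $\xi_1,\dots,\xi_N$ be independent real random variables with $\mathbb{E}(\xi_i)=0$ and $\mathbb{E}(\xi_i^2)=\frac{2\sigma^2}{Nh}$ for all $i$. Put $u_0(x_i)=u_i+\xi_i$ for $i=1,\dots,N$. Define $v^0_i=u_0(x_i)$ for $i=1,\dots,N_1$ and recursively $v^j_i=\frac{v^{j-1}_{2i}+v^{j-1}_{2i-1}}{2}$ for $i=1,\dots,N_{j+1}$, $j=1,2$. Define $$V_{j+1}=\sum_{i=1}^{N_{j+1}-1}|v^j_{i+1}-v^j_i|^2\cdot\frac{1}{2^j h},\qquad j=0,1,2,$$ and $$\hat\sigma^2=h^2\,\frac{\left(\frac{119}{16}-\frac{27}{4N}\right)V_1+\left(\frac{9}{4N}-\frac{49}{16}\right)V_2+\left(\frac{9}{2N}-\frac{35}{8}\right)V_3}{\frac{3577}{128}+\frac{189}{8N^2}-\frac{819}{16N}}.$$ Similarly define $u^{(0)}_i=u_i$ for $i=1,\dots,N_1$, $u^{(j)}_i=\frac{u^{(j-1)}_{2i-1}+u^{(j-1)}_{2i}}{2}$ for $i=1,\dots,N_{j+1}$, $j=1,2$, and $$V^c_{j+1}=\sum_{i=1}^{N_{j+1}-1}\frac{|u^{(j)}_{i+1}-u^{(j)}_i|^2}{2^{j}h},\qquad j=0,1,2.$$ Then $\hat\sigma^2$ is an estimate of $\sigma^2$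 whose bias is $$\mathbb{E}(\hat\sigma^2)-\sigma^2=h^2\,\frac{\left(\frac{49}{16}-\frac{9}{4N}\right)(V^c_1-V^c_2)+\left(\frac{35}{8}-\frac{9}{2N}\right)(V^c_1-V^c_3)}{\frac{3577}{128}+\frac{189}{8N^2}-\frac{819}{16N}}.$$
   Context: Here $u_0(x_i)$ models an observed (noisy) traffic velocity in the $i$-th time slice of length $h$, $u_i$ the clean velocity and $\xi_i$ the noise; $\sigma$ is the noise-strength parameter. The quantities $V_1,V_2,V_3$ are discrete squared variations of the observed data at three resolutions obtained by successive pairwise averaging, and $V^c_1,V^c_2,V^c_3$ are the analogous quantities for the clean data. *)

(* Defs.v *)
From HB Require Import structures.
From mathcomp Require Import all_boot all_order all_algebra.
From mathcomp Require Import all_classical all_reals all_analysis.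
Set Implicit Arguments. Unset Strict Implicit. Unset Printing Implicit Defensive.
Import Order.TTheory GRing.Theory Num.Theory.
Local Open Scope classical_set_scope.
Local Open Scope ring_scope.

(* Sequences are 1-indexed functions nat -> R (index 0 and indices > N unused). *)

Definition avg2 (R : realType) (v : nat -> R) : nat -> R :=
  fun i => (v (2 * i)%N + v (2 * i).-1) / 2.

Definition level (R : realType) (v : nat -> R) (j : nat) : nat -> R :=
  iter j (@avg2 R) v.

Definition Vvar (R : realType) (h : R) (N : nat) (v : nat -> R) (j : nat) : R :=
  \sum_(1 <= i < N %/ 2 ^ j)
     `|level v j i.+1 - level v j i| ^+ 2 / (2 ^+ j * h).

Definition denom (R : realType) (N : nat) : R :=
  3577 / 128 + 189 / (8 * N%:R ^+ 2) - 819 / (16 * N%:R).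

Definition sigma_hat2 (R : realType) (h : R) (N : nat) (v : nat -> R) : R :=
  h ^+ 2 *
  ((119 / 16 - 27 / (4 * N%:R)) * Vvar h N v 0
   + (9 / (4 * N%:R) - 49 / 16) * Vvar h N v 1
   + (9 / (2 * N%:R) - 35 / 8) * Vvar h N v 2) / denom R N.

Definition bias (R : realType) (h : R) (N : nat) (u : nat -> R) : R :=
  h ^+ 2 *
  ((49 / 16 - 9 / (4 * N%:R)) * (Vvar h N u 0 - Vvar h N u 1)
   + (35 / 8 - 9 / (2 * N%:R)) * (Vvar h N u 0 - Vvar h N u 2)) / denom R N.

Definition mutually_independent (d : measure_display) (T : measurableType d)
  (R : realType) (P : probability T R) (N : nat) (X : nat -> T -> R) : Prop :=
  forall (J : seq nat) (B : nat -> set R),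
    uniq J -> all (fun i => (1 <= i <= N)%N) J ->
    (forall i, measurable (B i)) ->
    P [set w | forall i, i \in J -> B i (X i w)] =
    (\prod_(i <- J) P (X i @^-1` B i))%E.

(* Main.v *)
Require Import Defs.
From HB Require Import structures.
From mathcomp Require Import all_boot all_order all_algebra.
From mathcomp Require Import all_classical all_reals all_analysis.
Import Order.TTheory GRing.Theory Num.Theory.
Local Open Scope classical_set_scope.
Local Open Scope ring_scope.
From mathcomp Require Import measurable_realfun.
From mathcomp Require Import ring lra zify.

Set Implicit Arguments. Unset Strict Implicit. Unset Printing Implicit Defensive.

Section indep.
Context (R : realType) (d : measure_display) (T : measurableType d)
  (P : probability T R).
Variables (X Y : {RV P >-> R}).

Definition pairXY (w : T) : (R * R)%type := (X w, Y w).
Lemma mpairXY : measurable_fun [set: T] pairXY.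
Proof. exact: measurable_fun_pair. Qed.
HB.instance Definition _ := isMeasurableFun.Build _ _ T (R * R)%type pairXY mpairXY.

Local Open Scope ereal_scope.

Lemma indep_mul0 :
  (forall A B, measurable A -> measurable B ->
     P (X @^-1` A `&` Y @^-1` B) = P (X @^-1` A) * P (Y @^-1` B)) ->
  P.-integrable setT (EFin \o (X \* Y)%R) ->
  P.-integrable setT (EFin \o Y) -> 'E_P[Y] = 0 -> 'E_P[X \* Y] = 0.
Proof.
move=> ind iXY iY EY0.
pose f : (R * R)%type -> \bar R := fun z => (z.1 * z.2)%:E.
have mf : measurable_fun [set: (R * R)%type] f.
  apply/measurable_EFinP; apply: measurable_funM => //.
have eqm : forall A, measurable A -> (distribution P X \x distribution P Y) A
    = distribution P pairXY A.
  move=> A mA; apply: product_measure_unique => //.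
have ipush : (distribution P pairXY).-integrable setT f.
  apply: integrable_pushforward => //.
have iprod : (distribution P X \x distribution P Y).-integrable setT f.
  apply/integrableP; split => //.
  rewrite (eq_measure_integral (distribution P pairXY)) //.
    by case/integrableP: ipush.
  by move=> A mA _; exact: eqm.
rewrite unlock.
transitivity (\int[distribution P pairXY]_z f z).
  by rewrite integral_pushforward.
rewrite (eq_measure_integral (distribution P X \x distribution P Y)); last first.
  by move=> A mA _; symmetry; apply: eqm.
rewrite -integral12_prod_meas1 //.
have iY' : (distribution P Y).-integrable setT EFin.
  apply: integrable_pushforward => //.
transitivity (\int[distribution P X]_x (cst 0 x)); last by rewrite integral0.
apply: eq_integral => x _.
rewrite /fubini_F /f /=.
under eq_integral do rewrite EFinM.
rewrite integralZl //.
rewrite integral_distribution //.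
by move: EY0; rewrite unlock => ->; rewrite mule0.
Qed.
End indep.

Lemma levelS (R : realType) (v : nat -> R) j :
  level v j.+1 = avg2 (level v j).
Proof. by rewrite /level iterS. Qed.

Lemma level_add (R : realType) (u v : nat -> R) j i :
  level (fun k => u k + v k) j i = level u j i + level v j i.
Proof.
elim: j i => [|j IH] i //.
rewrite !levelS /avg2 !IH; lra.
Qed.

Lemma level_formula (R : realType) (x : nat -> R) j i :
  level x j i.+1 = (2 ^+ j)^-1 * \sum_(2 ^ j * i <= k < 2 ^ j * i.+1) x k.+1.
Proof.
elim: j i => [|j IH] i.
  by rewrite expr0 invr1 mul1r !mul1n big_nat1.
rewrite levelS /avg2.
have -> : (2 * i.+1)%N = (2 * i + 1).+1 by lia.
have -> : (2 * i + 1).+1.-1 = (2 * i).+1 by rewrite addn1.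
rewrite !IH.
have -> : (2 ^ j.+1 * i = 2 ^ j * (2 * i))%N by rewrite expnS mulnCA mulnA.
have -> : (2 ^ j.+1 * i.+1 = 2 ^ j * (2 * i + 1).+1)%N.
  by rewrite expnS -mulnA mulnCA; congr (_ * _)%N; lia.
rewrite [in RHS](@big_cat_nat _ _ _ (2 ^ j * (2 * i + 1))); last 2 first.
- by rewrite leq_mul2l; apply/orP; right; lia.
- by rewrite leq_mul2l; apply/orP; right; lia.
rewrite -[(2 * i).+1]addn1 /= exprS invfM; ring.
Qed.

Definition cf (R : realType) j i k : R :=
  if (k < 2 ^ j * i.+1)%N then - (2 ^+ j)^-1 else (2 ^+ j)^-1.

Lemma diff_formula (R : realType) (x : nat -> R) j i :
  level x j i.+2 - level x j i.+1 =
  \sum_(2 ^ j * i <= k < 2 ^ j * i.+2) cf R j i k * x k.+1.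
Proof.
rewrite !level_formula.
rewrite [in RHS](@big_cat_nat _ _ _ (2 ^ j * i.+1)); last 2 first.
- by rewrite leq_mul2l; apply/orP; right.
- by rewrite leq_mul2l; apply/orP; right.
rewrite /= addrC; congr (_ + _).
  rewrite mulr_sumr; apply: eq_big_nat => k /andP[hk _].
  by rewrite /cf ltnNge hk.
rewrite mulr_sumr -sumrN; apply: eq_big_nat => k /andP[_ hk].
by rewrite /cf hk mulNr.
Qed.

Lemma cf_sqr (R : realType) j i k : cf R j i k ^+ 2 = (2 ^+ j)^-2.
Proof. by rewrite /cf; case: ifP => _; rewrite ?sqrrN exprVn. Qed.

Lemma norm_le_1sq (R : realType) (x : R) : `|x| <= 1 + x ^+ 2.
Proof.
rewrite -real_normK ?num_real //; have := normr_ge0 x; set y := `|x|; nra.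
Qed.

Lemma normM_le_sq (R : realType) (x y : R) : `|x * y| <= x ^+ 2 + y ^+ 2.
Proof.
rewrite normrM -(real_normK (num_real x)) -(real_normK (num_real y)).
have := normr_ge0 x; have := normr_ge0 y; set a := `|x|; set b := `|y|; nra.
Qed.

Section hasE.
Context (R : realType) (d : measure_display) (T : measurableType d)
  (P : probability T R).

Definition hasE (X : T -> R) (r : R) := X \in Lfun P 1 /\ ('E_P[X] = r%:E)%E.

Lemma hasE_cst c : hasE (fun=> c) c.
Proof. by split; [exact: Lfun_cst | exact: expectation_cst]. Qed.

Lemma hasE_add X Y a b : hasE X a -> hasE Y b ->
  hasE (fun w => X w + Y w) (a + b).
Proof.
move=> [hX eX] [hY eY]; split; first exact: rpredD.
by rewrite (expectationD hX hY) eX eY.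
Qed.

Lemma hasE_scale k X a : hasE X a -> hasE (fun w => k * X w) (k * a).
Proof.
move=> [hX eX]; split; first exact: (rpredZ k hX).
have -> : (fun w => k * X w) = k \o* X by apply/funext => w /=; exact: mulrC.
by rewrite (expectationZl k hX) eX EFinM.
Qed.

Lemma hasE_ext X Y a : (forall w, X w = Y w) -> hasE X a -> hasE Y a.
Proof. by move=> XY; have -> : X = Y by apply/funext. Qed.

Lemma hasE_eqr X a b : a = b -> hasE X a -> hasE X b.
Proof. by move=> ->. Qed.

Lemma hasE_sum (I : eqType) (r : seq I) (F : I -> T -> R) (g : I -> R) :
  (forall i, i \in r -> hasE (F i) (g i)) ->
  hasE (fun w => \sum_(i <- r) F i w) (\sum_(i <- r) g i).
Proof.
elim: r => [|a r IH] H.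
  by apply: (hasE_ext (X := fun=> 0)) => [w|]; rewrite ?big_nil//; exact: hasE_cst.
apply: (hasE_ext (X := fun w => F a w + \sum_(i <- r) F i w)).
  by move=> w; rewrite big_cons.
rewrite big_cons; apply: hasE_add; first by apply: H; rewrite mem_head.
by apply: IH => i ir; apply: H; rewrite inE ir orbT.
Qed.

Context (N : nat) (xi : nat -> {RV P >-> R}) (s2 : R).
Context (Hind : mutually_independent P N (fun i => (xi i : T -> R))).
Context (Hm : forall i, (1 <= i <= N)%N -> ('E_P[xi i] = 0)%E).
Context (Hs : forall i, (1 <= i <= N)%N ->
     ('E_P[fun w => (xi i w ^+ 2)%R] = s2%:E)%E).

Lemma sq_L1 i : (1 <= i <= N)%N -> (fun w => xi i w ^+ 2) \in Lfun P 1.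
Proof.
move=> hi; apply/Lfun1_integrable; apply/integrableP; split.
  by apply/measurable_EFinP; apply: measurable_funX.
rewrite (eq_integral (fun w => (xi i w ^+ 2)%:E)); last first.
  by move=> w _ /=; rewrite ger0_norm // sqr_ge0.
have := Hs hi; rewrite unlock => ->; exact: ltry.
Qed.

Lemma xi_L1 i : (1 <= i <= N)%N -> (xi i : T -> R) \in Lfun P 1.
Proof.
move=> hi.
have h1 : (fun w => 1 + xi i w ^+ 2) \in Lfun P 1.
  by apply: rpredD; [exact: Lfun_cst | exact: sq_L1].
apply/Lfun1_integrable; move/Lfun1_integrable: h1; apply: le_integrable => //.
  by apply/measurable_EFinP.
move=> w _ /=; rewrite lee_fin (ger0_norm (_ : 0 <= 1 + _)).
  exact: norm_le_1sq.
by rewrite addr_ge0 ?sqr_ge0.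
Qed.

Lemma prod_L1 i k : (1 <= i <= N)%N -> (1 <= k <= N)%N ->
  (fun w => xi i w * xi k w) \in Lfun P 1.
Proof.
move=> hi hk.
have h1 : (fun w => xi i w ^+ 2 + xi k w ^+ 2) \in Lfun P 1.
  by apply: rpredD; exact: sq_L1.
apply/Lfun1_integrable; move/Lfun1_integrable: h1; apply: le_integrable => //.
  by apply/measurable_EFinP; apply: measurable_funM.
move=> w _ /=; rewrite lee_fin (ger0_norm (_ : 0 <= _ + _)).
  exact: normM_le_sq.
by rewrite addr_ge0 ?sqr_ge0.
Qed.

Lemma hasE_xi i : (1 <= i <= N)%N -> hasE (xi i) 0.
Proof. by move=> hi; split; [exact: xi_L1 | exact: Hm]. Qed.

Lemma hasE_prod i k : (1 <= i <= N)%N -> (1 <= k <= N)%N ->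
  hasE (fun w => xi i w * xi k w) (if i == k then s2 else 0).
Proof.
move=> hi hk; split; first exact: prod_L1.
case: eqP => [<-|ik].
  rewrite -(Hs hi); congr ('E_P[_])%E; apply/funext => w; by rewrite expr2.
apply: (@indep_mul0 R d T P (xi i) (xi k)).
- move=> A B mA mB.
  move/eqP/negbTE: (ik) => ik'.
  have ki : (k == i) = false by rewrite eq_sym.
  have U : uniq [:: i; k] by rewrite /= inE ik'.
  have Al : all (fun m => (1 <= m <= N)%N) [:: i; k] by rewrite /= hi hk.
  have MB : forall m, measurable (if m == i then A else B) by move=> m; case: ifP.
  have := Hind U Al MB; rewrite !big_cons big_nil eqxx ki mule1 => <-.
  congr (P _); apply/seteqP; split => w /=.
    by move=> [hA hB] m; rewrite !inE => /orP[] /eqP ->; rewrite ?eqxx ?ki.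
  move=> H; split.
    by move: (H i); rewrite eqxx; apply; rewrite mem_head.
  by move: (H k); rewrite ki; apply; rewrite !inE eqxx orbT.
- exact/Lfun1_integrable/prod_L1.
- exact/Lfun1_integrable/xi_L1.
- exact: Hm.
Qed.

Lemma hasE_lin a b (c : nat -> R) : (b <= N)%N ->
  hasE (fun w => \sum_(a <= k < b) c k * xi k.+1 w) 0.
Proof.
move=> hb.
apply: (@hasE_eqr _ (\sum_(a <= k < b) c k * 0)).
  by rewrite big1 // => k _; rewrite mulr0.
apply: hasE_sum => k; rewrite mem_index_iota => /andP[_ hk].
apply: hasE_scale; apply: hasE_xi; apply/andP; split => //; lia.
Qed.

Lemma hasE_sq a b (c : nat -> R) : (b <= N)%N ->
  hasE (fun w => (\sum_(a <= k < b) c k * xi k.+1 w) ^+ 2)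
       (s2 * \sum_(a <= k < b) c k ^+ 2).
Proof.
move=> hb.
apply: (@hasE_ext (fun w => \sum_(a <= k < b) \sum_(a <= l < b)
    (c k * c l) * (xi k.+1 w * xi l.+1 w))).
  move=> w; rewrite expr2 mulr_suml; apply: eq_bigr => k _.
  rewrite mulr_sumr; apply: eq_bigr => l _; ring.
apply: (@hasE_eqr _ (\sum_(a <= k < b) \sum_(a <= l < b)
    (c k * c l) * (if k.+1 == l.+1 then s2 else 0))).
  rewrite mulr_sumr; apply: eq_big_seq => k; rewrite mem_index_iota => hk.
  rewrite (bigD1_seq k) ?mem_index_iota ?iota_uniq //= eqxx big1 ?addr0.
    by rewrite expr2 mulrC.
  by move=> l /negbTE lk; rewrite eqSS eq_sym lk mulr0.
apply: hasE_sum => k; rewrite mem_index_iota => /andP[_ hk].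
apply: hasE_sum => l; rewrite mem_index_iota => /andP[_ hl].
apply: hasE_scale; apply: hasE_prod; apply/andP; split => //; lia.
Qed.

Lemma hasE_Vvar (h : R) (u : nat -> R) j : h != 0 ->
  hasE (fun w => Vvar h N (fun i => u i + xi i w) j)
       (Vvar h N u j + (N %/ 2 ^ j - 1)%:R * (2 * s2 / (2 ^+ j * (2 ^+ j * h)))).
Proof.
move=> h0; rewrite /Vvar.
set C := (2 ^+ j * h).
have C0 : C != 0 by rewrite mulf_neq0 ?expf_neq0 // pnatr_eq0.
have p0 : (2 ^+ j : R) != 0 by rewrite expf_neq0 // pnatr_eq0.
set K := 2 * s2 / (2 ^+ j * C).
apply: (@hasE_eqr _ (\sum_(1 <= i < N %/ 2 ^ j)
    (`|level u j i.+1 - level u j i| ^+ 2 / C + K))).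
  by rewrite big_split /= sumr_const_nat mulr_natl.
apply: hasE_sum => i; rewrite mem_index_iota => /andP[i1 hi].
case: i i1 hi => [|i] // _ hi.
have hb : (2 ^ j * i.+2 <= N)%N.
  apply: (leq_trans _ (leq_trunc_div N (2 ^ j))).
  by rewrite mulnC leq_mul2r; apply/orP; right.
set D := level u j i.+2 - level u j i.+1.
apply: (@hasE_ext (fun w => D ^+ 2 / C + (2 * D / C) *
     (\sum_(2 ^ j * i <= k < 2 ^ j * i.+2) cf R j i k * xi k.+1 w)
     + C^-1 * (\sum_(2 ^ j * i <= k < 2 ^ j * i.+2) cf R j i k * xi k.+1 w) ^+ 2)).
  move=> w; rewrite !(level_add u (fun k => xi k w)).
  rewrite -(diff_formula (fun k => xi k w)) real_normK ?num_real //.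
  by rewrite /D; field.
apply: (@hasE_eqr _ (D ^+ 2 / C + (2 * D / C) * 0 +
   C^-1 * (s2 * \sum_(2 ^ j * i <= k < 2 ^ j * i.+2) cf R j i k ^+ 2))).
  rewrite real_normK ?num_real // mulr0 addr0; congr (_ + _).
  rewrite (eq_bigr (fun=> (2 ^+ j)^-2)); last by move=> k _; exact: cf_sqr.
  rewrite sumr_const_nat.
  have -> : (2 ^ j * i.+2 - 2 ^ j * i = 2 ^ j * 2)%N.
    by rewrite -mulnBr; congr (_ * _)%N; lia.
  rewrite -[_ *+ (2 ^ j * 2)%N]mulr_natr natrM natrX /K /C; field.
  by rewrite p0 h0.
apply: hasE_add; first apply: hasE_add.
- exact: hasE_cst.
- by apply: hasE_scale; apply: hasE_lin.
- by apply: hasE_scale; apply: hasE_sq.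
Qed.

End hasE.

Unset Implicit Arguments. Set Strict Implicit. Set Printing Implicit Defensive.

Theorem theorem2p1 (R : realType) (d : measure_display) (T : measurableType d)
  (P : probability T R) (N : nat) (h sigma : R) (u : nat -> R)
  (xi : nat -> {RV P >-> R}) :
  (0 < N)%N -> (4 %| N)%N -> 0 < h -> 0 <= sigma ->
  mutually_independent P N (fun i => (xi i : T -> R)) ->
  (forall i, (1 <= i <= N)%N -> ('E_P[xi i] = 0)%E) ->
  (forall i, (1 <= i <= N)%N ->
     ('E_P[fun w => (xi i w ^+ 2)%R] = (2 * sigma ^+ 2 / (N%:R * h))%:E)%E) ->
  ('E_P[fun w => sigma_hat2 h N (fun i => (u i + xi i w)%R)]
     = (sigma ^+ 2 + bias h N u)%:E)%E.
Proof.
move=> N0 N4 h0 sig0 Hind Hm Hs.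
have hh : h != 0 by rewrite gt_eqF.
have V0 := hasE_Vvar Hind Hm Hs u 0 hh.
have V1 := hasE_Vvar Hind Hm Hs u 1 hh.
have V2 := hasE_Vvar Hind Hm Hs u 2 hh.
have H := hasE_scale (denom R N)^-1 (hasE_scale (h ^+ 2) (hasE_add (hasE_add
  (hasE_scale (119 / 16 - 27 / (4 * N%:R)) V0)
  (hasE_scale (9 / (4 * N%:R) - 49 / 16) V1))
  (hasE_scale (9 / (2 * N%:R) - 35 / 8) V2))).
have [_ ->] := hasE_ext (Y := fun w => sigma_hat2 h N (fun i => u i + xi i w))
  (fun w => mulrC _ _) H.
congr EFin.
have [q Nq] : exists q, N = (q * 4)%N by exists (N %/ 4)%N; rewrite divnK.
have q1 : (1 <= q)%N by move: N0; rewrite Nq; lia.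
have e0 : (N %/ 2 ^ 0 - 1)%N = (q * 4 - 1)%N by rewrite expn0 divn1 Nq.
have e1 : (N %/ 2 ^ 1 - 1)%N = (q * 2 - 1)%N.
  have -> : (N %/ 2 ^ 1 = q * 2)%N.
    by rewrite Nq expn1 (_ : (q * 4 = q * 2 * 2)%N) ?mulnK // -mulnA.
  by [].
have e2 : (N %/ 2 ^ 2 - 1)%N = (q - 1)%N.
  by rewrite Nq (_ : (2 ^ 2 = 4)%N) // mulnK.
rewrite e0 e1 e2 !natrB; [|lia|lia|lia].
have nN : (N%:R : R) = q%:R * 4 by rewrite Nq natrM.
have q0 : (q%:R : R) != 0 by rewrite pnatr_eq0; lia.
rewrite /bias /denom !nN !natrM.
field.
have hx : 1 <= (q%:R : R) by rewrite ler1n.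
rewrite q0 hh andbT /=; apply/lt0r_neq0.
set x := (q%:R : R) in hx *; nra.
Qed.
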